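(* Let $\lambda>0$ and $\alpha_0,\tilde{\alpha}_0,\alpha,\tilde{\alpha}\in(0,1]$ with $\frac{\tilde{\alpha}}{\alpha}-\frac{\tilde{\alpha}_0}{\alpha_0}>0$. For $j\geq0$ set $\alpha_j=\alpha$, $\tilde\alpha_j=\tilde\alpha$ for $j\geq1$, $d_{k,j}:=\frac{\lambda^k}{\Gamma(\alpha_jk+1)}$, $D_j(x):=E_{\alpha_j,1}(\lambda x)$ and $\delta_j(t):=t^{\tilde{\alpha}_j}$; also set $v(\delta(t)):=t^{\tilde{\alpha}/\alpha}$ and $\Delta(u):=(\lambda u)^{1/\alpha}$. Then for all $u>0$, $$\lim_{t\to\infty}\frac{1}{t^{\tilde{\alpha}/\alpha}}\log\sum_{k\geq0}\frac{d_{k,k}(u\delta_k(t))^k}{D_k(\delta_k(t))}=\max\{\Delta(u)-\Delta(1),0\}=\max\{\lambda^{1/\alpha}(u^{1/\alpha}-1),0\}.$$ Explicitly, the sum equals $\frac{1}{E_{\alpha_0,1}(\lambda t^{\tilde{\alpha}_0})}+\sum_{k\geq1}\frac{\lambda^k(ut^{\tilde{\alpha}})^k}{\Gamma(\alpha k+1)E_{\alpha,1}(\lambda t^{\tilde{\alpha}})}$.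
   Context: For $a\in(0,1]$, $E_{a,1}(x):=\sum_{k\geq0}\frac{x^k}{\Gamma(ak+1)}$ denotes the Mittag-Leffler function (with two parameters $a$ and $1$). *)

(* Defs.v *)
From Stdlib Require Import Reals.
From Coquelicot Require Import Coquelicot.
Open Scope R_scope.

Definition Gamma (x : R) : R :=
  RInt_gen (fun t => Rpower t (x - 1) * exp (- t)) (at_right 0) (Rbar_locally p_infty).

Definition ML (a x : R) : R :=
  Series (fun k : nat => x ^ k / Gamma (a * INR k + 1)).

Definition seq0 (c0 c : R) (j : nat) : R := match j with O => c0 | S _ => c end.

Definition dkj (lam a0 a : R) (k j : nat) : R := lam ^ k / Gamma (seq0 a0 a j * INR k + 1).
Definition Dj (lam a0 a : R) (j : nat) (x : R) : R := ML (seq0 a0 a j) (lam * x).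
Definition deltaj (ta0 ta : R) (j : nat) (t : R) : R := Rpower t (seq0 ta0 ta j).
Definition DeltaF (lam a u : R) : R := Rpower (lam * u) (1 / a).

(* Main.v *)
From Stdlib Require Import Reals Lra Lia Psatz Classical.
Require Import Defs.
From Coquelicot Require Import Coquelicot.
Open Scope R_scope.

Lemma ln_le_sub1 (w : R) : 0 < w -> ln w <= w - 1.
Proof. intros Hw. pose proof (exp_ineq1_le (ln w)). rewrite exp_ln in H; lra. Qed.

Lemma sum_n_nonneg (a : nat -> R) n : (forall m, 0 <= a m) -> 0 <= sum_n a n.
Proof.
  intros Ha. induction n. rewrite sum_O. apply Ha.
  rewrite sum_Sn. unfold plus; simpl. specialize (Ha (S n)). lra.
Qed.

Lemma sum_n_ge_term (a : nat -> R) (k n : nat) :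
  (forall m, 0 <= a m) -> (k <= n)%nat -> a k <= sum_n a n.
Proof.
  intros Ha Hk. induction n.
  - assert (k = 0%nat) by lia. subst. rewrite sum_O. lra.
  - destruct (Nat.eq_dec k (S n)) as [->|Hne].
    + rewrite sum_Sn. unfold plus; simpl.
      pose proof (sum_n_nonneg a n Ha). lra.
    + rewrite sum_Sn. unfold plus; simpl. specialize (IHn ltac:(lia)). specialize (Ha (S n)). lra.
Qed.

Lemma Series_ge_term (a : nat -> R) (k : nat) :
  (forall m, 0 <= a m) -> ex_series a -> a k <= Series a.
Proof.
  intros Ha Hex. pose proof (Series_correct _ Hex) as Hs.
  assert (Hl : is_lim_seq (sum_n a) (Series a)) by exact Hs.
  assert (Hc : is_lim_seq (fun _ : nat => a k) (a k)) by apply is_lim_seq_const.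
  apply (is_lim_seq_le_loc (fun _ => a k) (sum_n a) (a k) (Series a)); auto.
  exists k. intros n Hn. apply sum_n_ge_term; auto.
Qed.

Lemma ball_R (l eps y : R) : Rabs (y - l) < eps -> ball l eps y.
Proof. intros H. unfold ball; simpl. unfold AbsRing_ball, abs, minus, plus, opp; simpl. exact H. Qed.

Lemma RInt_gen_pos_bounded (f : R -> R) (M : R) :
  (forall x, 0 < x -> 0 <= f x) ->
  (forall e b, 0 < e -> e <= b -> ex_RInt f e b) ->
  (forall e b, 0 < e -> e <= b -> RInt f e b <= M) ->
  exists l, is_RInt_gen f (at_right 0) (Rbar_locally p_infty) l /\ l <= M /\
    (forall e b, 0 < e -> e <= b -> RInt f e b <= l).
Proof.
  intros Hpos Hex Hbd.
  set (E := fun y => exists e b, 0 < e /\ e <= b /\ y = RInt f e b).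
  assert (HB : bound E). { exists M. intros y (e & b & He & Heb & ->). auto. }
  assert (HE : exists y, E y). { exists (RInt f 1 1). exists 1, 1. repeat split; lra. }
  destruct (completeness E HB HE) as [l [Hub Hlub]].
  exists l. split; [|split].
  - intros P [eps HP]. simpl.
    assert (Hy : exists e0 b0, 0 < e0 /\ e0 <= b0 /\ l - eps < RInt f e0 b0).
    { apply NNPP. intros Hn.
      assert (l <= l - eps).
      { apply Hlub. intros y (e & b & He & Heb & ->).
        apply Rnot_lt_le. intros Hl. apply Hn. exists e, b. auto. }
      destruct eps; simpl in *; lra. }
    destruct Hy as (e0 & b0 & He0 & Heb0 & Hlt).
    apply (Filter_prod _ _ _ (fun x => 0 < x < e0) (fun y => b0 < y)).
    + exists (mkposreal e0 He0). intros y Hy Hy0. split; auto.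
      unfold ball in Hy; simpl in Hy; unfold AbsRing_ball, abs, minus, plus, opp in Hy; simpl in Hy.
      apply Rabs_lt_between in Hy. lra.
    + exists b0. auto.
    + intros x y [Hx0 Hx1] Hy. simpl.
      exists (RInt f x y). split.
      * exact (RInt_correct f x y (Hex x y Hx0 ltac:(lra))).
      * apply HP. apply ball_R.
        assert (Hle : RInt f x y <= l). { apply Hub. exists x, y. repeat split; lra. }
        assert (Hge : RInt f e0 b0 <= RInt f x y).
        { rewrite <- (RInt_Chasles f x e0 y); [| apply Hex; lra | apply Hex; lra].
          rewrite <- (RInt_Chasles f e0 b0 y); [| apply Hex; lra | apply Hex; lra].
          unfold plus; simpl.
          assert (0 <= RInt f x e0). { apply RInt_ge_0; [lra| apply Hex; lra |]. intros; apply Hpos; lra. }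
          assert (0 <= RInt f b0 y). { apply RInt_ge_0; [lra| apply Hex; lra |]. intros; apply Hpos; lra. }
          lra. }
        apply Rabs_lt_between. lra.
  - apply Hlub. intros y (e & b & He & Heb & ->). auto.
  - intros e b He Heb. apply Hub. exists e, b. auto.
Qed.

Lemma exp_le_mono (x y : R) : x <= y -> exp x <= exp y.
Proof. intros [H|H]. left; apply exp_increasing; auto. subst; lra. Qed.

Lemma ln_div' (x y : R) : 0 < x -> 0 < y -> ln (x / y) = ln x - ln y.
Proof. intros. unfold Rdiv. rewrite ln_mult; [rewrite ln_Rinv; [ring|auto] | auto | apply Rinv_0_lt_compat; auto]. Qed.

Definition G_int (p t : R) : R := Rpower t p * exp (- t).

Lemma G_cont (p z : R) : 0 < z -> continuous (G_int p) z.
Proof.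
  intros Hz. apply (ex_derive_continuous (K:=R_AbsRing) (V:=R_NormedModule)). unfold G_int, Rpower. auto_derive. lra.
Qed.

Lemma G_ex (p e b : R) : 0 < e -> e <= b -> ex_RInt (G_int p) e b.
Proof.
  intros He Heb. apply (ex_RInt_continuous (V:=R_CompleteNormedModule)). intros z Hz. apply G_cont.
  rewrite Rmin_left in Hz; lra.
Qed.

Lemma G_pos (p t : R) : 0 <= G_int p t.
Proof. unfold G_int, Rpower. pose proof (exp_pos (p * ln t)). pose proof (exp_pos (-t)). nra. Qed.

Definition GK (p : R) : R := Rpower ((p + 1) / exp 1) p.

Lemma G_pointwise (p t : R) : 0 <= p -> 0 < t ->
  G_int p t <= GK p * exp (- t / (p + 1)).
Proof.
  intros Hp Ht. unfold G_int, GK, Rpower. rewrite <- !exp_plus.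
  apply exp_le_mono.
  rewrite ln_div'; [|lra|apply exp_pos]. rewrite ln_exp.
  assert (H1 : ln (t / (p+1)) <= t / (p+1) - 1) by (apply ln_le_sub1; apply Rdiv_lt_0_compat; lra).
  rewrite ln_div' in H1 by lra.
  assert (H2 : p * (ln t - ln (p+1)) <= p * (t/(p+1) - 1)) by (apply Rmult_le_compat_l; lra).
  assert (H3 : p * (t / (p+1)) = t - t / (p+1)) by (field; lra).
  unfold Rdiv in *. nra.
Qed.

Lemma G_RInt_upper (p e b : R) : 0 <= p -> 0 < e -> e <= b ->
  RInt (G_int p) e b <= GK p * (p + 1).
Proof.
  intros Hp He Heb.
  set (h := fun t => GK p * exp (- t / (p + 1))).
  set (F := fun t => - (p+1) * GK p * exp (- t / (p + 1))).
  assert (HF : is_RInt h e b (minus (F b) (F e))).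
  { apply (is_RInt_derive (V:=R_CompleteNormedModule)).
    - intros x _. unfold F, h. auto_derive; [auto| unfold Rdiv; field; lra].
    - intros x _. unfold h. apply (ex_derive_continuous (K:=R_AbsRing) (V:=R_NormedModule)). auto_derive. auto. }
  assert (Hle : RInt (G_int p) e b <= RInt h e b).
  { apply RInt_le; auto. apply G_ex; auto. eexists; eauto.
    intros x Hx. apply G_pointwise; lra. }
  rewrite (is_RInt_unique h e b _ HF) in Hle.
  unfold minus, plus, opp in Hle; simpl in Hle. unfold F in Hle.
  assert (0 < GK p) by (unfold GK, Rpower; apply exp_pos).
  pose proof (exp_pos (- b / (p+1))). pose proof (exp_pos (- e / (p+1))).
  assert (exp (- e / (p+1)) <= 1).
  { assert (Hx0 : exp (- e / (p+1)) <= exp 0).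
    { apply exp_le_mono. unfold Rdiv.
      assert (0 < / (p+1)) by (apply Rinv_0_lt_compat; lra). nra. }
    rewrite exp_0 in Hx0. exact Hx0. }
  assert (0 < (p+1) * GK p) by nra.
  assert ((p+1) * GK p * exp (- e / (p+1)) <= (p+1) * GK p * 1) by (apply Rmult_le_compat_l; lra).
  assert (0 <= (p+1) * GK p * exp (- b / (p+1))) by nra.
  nra.
Qed.

Lemma Gamma_bounds (x : R) : 1 <= x ->
  Rpower x (x - 1) * exp (- (x + 1)) <= Gamma x <= GK (x - 1) * x.
Proof.
  intros Hx. set (p := x - 1).
  assert (Hp : 0 <= p) by (unfold p; lra).
  destruct (RInt_gen_pos_bounded (G_int p) (GK p * (p+1))) as (l & Hl & HlM & Hlge).
  - intros; apply G_pos.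
  - intros; apply G_ex; auto.
  - intros; apply G_RInt_upper; auto.
  - assert (HG : Gamma x = l).
    { unfold Gamma. apply (is_RInt_gen_unique (G_int p)). exact Hl. }
    rewrite HG. split.
    + specialize (Hlge x (x+1) ltac:(lra) ltac:(lra)).
      assert (Hlow : RInt (fun _ => Rpower x (x-1) * exp (-(x+1))) x (x+1) <= RInt (G_int p) x (x+1)).
      { apply RInt_le. lra. apply ex_RInt_const. apply G_ex; lra.
        intros t Ht. unfold G_int, p.
        apply Rmult_le_compat.
        - unfold Rpower; left; apply exp_pos.
        - left; apply exp_pos.
        - apply Rle_Rpower_l; lra.
        - apply exp_le_mono; lra. }
      rewrite RInt_const in Hlow. unfold scal in Hlow; simpl in Hlow; unfold mult in Hlow; simpl in Hlow.
      unfold p in *. replace (x + 1 - x) with 1 in Hlow by ring. lra.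
    + replace (p + 1) with x in HlM by (unfold p; ring). exact HlM.
Qed.

Lemma ln_le_mono (x y : R) : 0 < x -> x <= y -> ln x <= ln y.
Proof. intros Hx [H|H]. left; apply ln_increasing; auto. subst; lra. Qed.

Lemma exp_pow_INR (y : R) (k : nat) : exp y ^ k = exp (INR k * y).
Proof.
  induction k. simpl. rewrite Rmult_0_l, exp_0. reflexivity.
  rewrite S_INR. simpl. rewrite IHk, <- exp_plus. f_equal. ring.
Qed.

Lemma Rpower_pow_exp (z a : R) (k : nat) : 0 < z -> Rpower z a ^ k = exp (a * INR k * ln z).
Proof.
  intros Hz. rewrite <- Rpower_pow by (unfold Rpower; apply exp_pos).
  rewrite Rpower_mult. reflexivity.
Qed.

Definition MLt (a x : R) (k : nat) : R := x ^ k / Gamma (a * INR k + 1).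

Lemma Gamma_pos (p : R) : 0 <= p -> 0 < Gamma (p + 1).
Proof.
  intros Hp. destruct (Gamma_bounds (p+1) ltac:(lra)) as [H _].
  eapply Rlt_le_trans; [|exact H].
  apply Rmult_lt_0_compat; [unfold Rpower; apply exp_pos | apply exp_pos].
Qed.

Lemma MLt_nonneg (a x : R) (k : nat) : 0 <= a -> 0 <= x -> 0 <= MLt a x k.
Proof.
  intros Ha Hx. unfold MLt. apply Rdiv_le_0_compat. apply pow_le; auto.
  apply Gamma_pos. apply Rmult_le_pos; auto. apply pos_INR.
Qed.

Lemma MLt_upper (a z : R) (k : nat) : 0 < a -> 0 < z ->
  MLt a (Rpower z a) k <= exp (z + 3) * exp (- (a / (z + 1))) ^ k.
Proof.
  intros Ha Hz. unfold MLt. rewrite Rpower_pow_exp by auto. rewrite exp_pow_INR.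
  set (p := a * INR k).
  assert (Hp : 0 <= p) by (unfold p; apply Rmult_le_pos; [lra|apply pos_INR]).
  destruct (Gamma_bounds (p+1) ltac:(lra)) as [HG _].
  replace (p + 1 - 1) with p in HG by ring.
  unfold Rpower in HG. rewrite <- exp_plus in HG.
  replace (a * INR k + 1) with (p + 1) by reflexivity.
  assert (Hle : exp (p * ln z) / Gamma (p+1) <= exp (p * ln z) / exp (p * ln (p+1) + - (p + 1 + 1))).
  { apply Rmult_le_compat_l. left; apply exp_pos. apply Rinv_le_contravar. apply exp_pos. exact HG. }
  eapply Rle_trans; [exact Hle|].
  unfold Rdiv. rewrite <- exp_Ropp, <- !exp_plus. apply exp_le_mono.
  assert (F1 : ln (z / (z+1)) <= z / (z+1) - 1) by (apply ln_le_sub1; apply Rdiv_lt_0_compat; lra).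
  assert (F2 : ln ((z+1) / (p+1)) <= (z+1) / (p+1) - 1) by (apply ln_le_sub1; apply Rdiv_lt_0_compat; lra).
  rewrite ln_div' in F1, F2 by lra.
  assert (E1 : z / (z+1) - 1 = - (1 / (z+1))) by (field; lra).
  assert (E2 : p * ((z+1) / (p+1)) <= z + 1).
  { apply (Rmult_le_reg_r (p+1)). lra. unfold Rdiv. rewrite Rmult_assoc, Rmult_assoc, Rinv_l by lra. nra. }
  assert (E3 : INR k * - (a * / (z+1)) = - (p * (1 / (z+1)))) by (unfold p, Rdiv; ring).
  rewrite E3.
  assert (H1 : p * (ln z - ln (z+1)) <= p * (- (1/(z+1)))) by (apply Rmult_le_compat_l; lra).
  assert (H2 : p * (ln (z+1) - ln (p+1)) <= p * ((z+1)/(p+1) - 1)) by (apply Rmult_le_compat_l; lra).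
  nra.
Qed.

Lemma geom_bound (a z : R) : 0 < a -> 0 < z ->
  Rabs (exp (- (a / (z+1)))) < 1 /\ / (1 - exp (- (a / (z+1)))) <= 1 + (z+1)/a.
Proof.
  intros Ha Hz. set (h := a / (z+1)).
  assert (Hh : 0 < h) by (unfold h; apply Rdiv_lt_0_compat; lra).
  pose proof (exp_ineq1_le h) as Heh.
  assert (Hr : exp (- h) <= / (1 + h)).
  { rewrite exp_Ropp. apply Rinv_le_contravar; lra. }
  pose proof (exp_pos (-h)).
  assert (/ (1 + h) < 1). { rewrite <- Rinv_1. apply Rinv_lt_contravar; lra. }
  split.
  - rewrite Rabs_pos_eq; lra.
  - assert (1 - exp (-h) >= h / (1+h)).
    { assert (h / (1+h) = 1 - / (1+h)) by (field; lra). lra. }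
    assert (Hq : (z+1)/a = / h) by (unfold h; field; lra).
    rewrite Hq.
    assert (0 < h / (1+h)) by (apply Rdiv_lt_0_compat; lra).
    apply Rle_trans with (/ (h / (1+h))).
    + apply Rinv_le_contravar; lra.
    + right. field. lra.
Qed.

Lemma ML_ex (a z : R) : 0 < a -> 0 < z -> ex_series (MLt a (Rpower z a)).
Proof.
  intros Ha Hz. destruct (geom_bound a z Ha Hz) as [Hr _].
  apply (ex_series_le (K:=R_AbsRing) (V:=R_CompleteNormedModule) _ (fun k => exp (z+3) * exp (- (a / (z+1))) ^ k)).
  - intros n. unfold norm; simpl. unfold abs; simpl. rewrite Rabs_pos_eq.
    apply MLt_upper; auto. apply MLt_nonneg; [lra|]. unfold Rpower; left; apply exp_pos.
  - exact (ex_series_scal_l (K:=R_AbsRing) (V:=R_NormedModule) (exp (z+3)) _ (ex_series_geom _ Hr)).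
Qed.

Lemma ML_upper (a z : R) : 0 < a -> 0 < z ->
  ML a (Rpower z a) <= exp (z + 3) * (1 + (z+1)/a).
Proof.
  intros Ha Hz. destruct (geom_bound a z Ha Hz) as [Hr Hinv].
  unfold ML. change (fun k : nat => Rpower z a ^ k / Gamma (a * INR k + 1)) with (MLt a (Rpower z a)).
  eapply Rle_trans.
  - apply (Series_le _ (fun k => exp (z+3) * exp (- (a / (z+1))) ^ k)).
    + intros n. split. apply MLt_nonneg; [lra|]. unfold Rpower; left; apply exp_pos.
      apply MLt_upper; auto.
    + exact (ex_series_scal_l (K:=R_AbsRing) (V:=R_NormedModule) (exp (z+3)) _ (ex_series_geom _ Hr)).
  - rewrite Series_scal_l, Series_geom by exact Hr.
    apply Rmult_le_compat_l. left; apply exp_pos. exact Hinv.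
Qed.

Lemma MLt_lower (a z : R) (k : nat) : 0 < a -> 0 < z -> z - a < a * INR k <= z ->
  exp (z - a - 1) / (z + 1) <= MLt a (Rpower z a) k.
Proof.
  intros Ha Hz [Hk1 Hk2]. unfold MLt. rewrite Rpower_pow_exp by auto.
  set (p := a * INR k) in *.
  assert (Hp : 0 <= p) by (unfold p; apply Rmult_le_pos; [lra|apply pos_INR]).
  destruct (Gamma_bounds (p+1) ltac:(lra)) as [_ HG].
  replace (p + 1 - 1) with p in HG by ring.
  unfold GK, Rpower in HG. rewrite ln_div' in HG by (try lra; apply exp_pos). rewrite ln_exp in HG.
  replace (a * INR k + 1) with (p + 1) by reflexivity.
  pose proof (Gamma_pos p Hp) as HGp.
  apply Rle_trans with (exp (p * ln z) / (exp (p * (ln (p + 1) - 1)) * (p + 1))).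
  2:{ apply Rmult_le_compat_l. left; apply exp_pos. apply Rinv_le_contravar; auto. }
  assert (F1 : ln ((z+1) / z) <= (z+1) / z - 1) by (apply ln_le_sub1; apply Rdiv_lt_0_compat; lra).
  rewrite ln_div' in F1 by lra.
  assert (E1 : (z+1) / z - 1 = 1 / z) by (field; lra).
  assert (Hl : ln (p+1) <= ln (z+1)) by (apply ln_le_mono; lra).
  assert (H1 : p * (ln (z+1) - ln z) <= p * (1/z)) by (apply Rmult_le_compat_l; lra).
  assert (H2 : p * (1/z) <= 1).
  { unfold Rdiv. rewrite Rmult_1_l. apply (Rmult_le_reg_r z); auto. rewrite Rmult_assoc, Rinv_l by lra. lra. }
  assert (H3 : p * ln (p+1) <= p * ln (z+1)) by (apply Rmult_le_compat_l; lra).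
  assert (Hexp : exp (z - a - 1) <= exp (p * ln z) / exp (p * (ln (p+1) - 1))).
  { unfold Rdiv. rewrite <- exp_Ropp, <- exp_plus. apply exp_le_mono. nra. }
  unfold Rdiv. rewrite Rinv_mult, <- Rmult_assoc.
  apply Rmult_le_compat.
  - left; apply exp_pos.
  - left; apply Rinv_0_lt_compat; lra.
  - exact Hexp.
  - apply Rinv_le_contravar; lra.
Qed.

Lemma ML_lower (a z : R) : 0 < a -> 0 < z ->
  exp (z - a - 1) / (z + 1) <= ML a (Rpower z a).
Proof.
  intros Ha Hz.
  assert (Hza : 0 <= z / a) by (apply Rdiv_le_0_compat; lra).
  destruct (nfloor_ex (z / a) Hza) as [k Hk].
  eapply Rle_trans.
  - apply (MLt_lower a z k); auto.
    split.
    + assert (z / a < INR k + 1) by lra.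
      apply (Rmult_lt_compat_l a) in H; auto.
      replace (a * (z / a)) with z in H by (field; lra). lra.
    + assert (INR k <= z / a) by lra.
      apply (Rmult_le_compat_l a) in H; [|lra].
      replace (a * (z / a)) with z in H by (field; lra). lra.
  - unfold ML. apply (Series_ge_term (MLt a (Rpower z a)) k).
    + intros m. apply MLt_nonneg; [lra|]. unfold Rpower; left; apply exp_pos.
    + apply ML_ex; auto.
Qed.

Lemma ln_upperE (E zu a : R) : 0 < a -> 0 <= zu -> 0 < E ->
  E <= exp (zu + 3) * (1 + (zu + 1) / a) -> ln E <= zu + 3 + ln (1 + (zu + 1) / a).
Proof.
  intros Ha Hz HE Hb.
  assert (0 < 1 + (zu+1)/a) by (assert (0 <= (zu+1)/a) by (apply Rdiv_le_0_compat; lra); lra).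
  apply ln_le_mono in Hb; auto. rewrite ln_mult, ln_exp in Hb; auto. apply exp_pos.
Qed.

Lemma ln_lowerE (E z a : R) : 0 <= z ->
  exp (z - a - 1) / (z + 1) <= E -> z - a - 1 - ln (z + 1) <= ln E.
Proof.
  intros Hz Hb.
  assert (0 < exp (z - a - 1) / (z + 1)) by (apply Rdiv_lt_0_compat; [apply exp_pos|lra]).
  apply ln_le_mono in Hb; auto. rewrite ln_div', ln_exp in Hb; auto. apply exp_pos. lra.
Qed.

Lemma ln_nonneg (x : R) : 1 <= x -> 0 <= ln x.
Proof. intros H. rewrite <- ln_1. apply ln_le_mono; lra. Qed.

Lemma upper_abstract (S E E' zu z1 a : R) : 0 < a -> 0 <= zu -> 0 <= z1 ->
  0 < S -> 0 < E -> 0 < E' -> S <= 2 + E' / E ->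
  E' <= exp (zu + 3) * (1 + (zu + 1) / a) ->
  exp (z1 - a - 1) / (z1 + 1) <= E ->
  ln S <= Rmax (zu - z1) 0 + (ln 3 + 3 + ln (1 + (zu + 1) / a) + a + 1 + ln (z1 + 1)).
Proof.
  intros Ha Hzu Hz1 HS HE HE' HSb HE'b HEb.
  pose proof (ln_upperE E' zu a Ha Hzu HE' HE'b) as U1.
  pose proof (ln_lowerE E z1 a Hz1 HEb) as L1.
  assert (P1 : 0 <= ln (1 + (zu + 1) / a)).
  { apply ln_nonneg. assert (0 <= (zu+1)/a) by (apply Rdiv_le_0_compat; lra); lra. }
  assert (P2 : 0 <= ln (z1 + 1)) by (apply ln_nonneg; lra).
  assert (P3 : 0 <= ln 3) by (apply ln_nonneg; lra).
  pose proof (Rmax_l (zu - z1) 0). pose proof (Rmax_r (zu - z1) 0).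
  assert (HR : 0 < E' / E) by (apply Rdiv_lt_0_compat; auto).
  destruct (Rle_lt_dec (E' / E) 1) as [Hle|Hgt].
  - assert (ln S <= ln 3) by (apply ln_le_mono; lra). lra.
  - assert (ln S <= ln (3 * (E' / E))) by (apply ln_le_mono; lra).
    rewrite ln_mult, ln_div' in H1; try lra. 
Qed.

Lemma lower_abstract (S E E0 c0 zu z1 z0 a a0 : R) : 0 < a -> 0 < a0 -> 0 <= zu -> 0 <= z1 -> 0 <= z0 ->
  0 < c0 -> 0 < E -> 0 < E0 ->
  c0 / E0 <= S -> exp (zu - a - 1) / (zu + 1) / E <= S ->
  E <= exp (z1 + 3) * (1 + (z1 + 1) / a) ->
  E0 <= exp (z0 + 3) * (1 + (z0 + 1) / a0) ->
  Rmax (zu - z1) 0 - (Rabs (ln c0) + z0 + 3 + ln (1 + (z0 + 1) / a0) + a + 4 + ln (zu + 1)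
                      + ln (1 + (z1 + 1) / a)) <= ln S.
Proof.
  intros Ha Ha0 Hzu Hz1 Hz0 Hc0 HE HE0 HS1 HS2 HEb HE0b.
  pose proof (ln_upperE E z1 a Ha Hz1 HE HEb) as U1.
  pose proof (ln_upperE E0 z0 a0 Ha0 Hz0 HE0 HE0b) as U0.
  assert (P1 : 0 <= ln (1 + (z1 + 1) / a)).
  { apply ln_nonneg. assert (0 <= (z1+1)/a) by (apply Rdiv_le_0_compat; lra); lra. }
  assert (P0 : 0 <= ln (1 + (z0 + 1) / a0)).
  { apply ln_nonneg. assert (0 <= (z0+1)/a0) by (apply Rdiv_le_0_compat; lra); lra. }
  assert (P2 : 0 <= ln (zu + 1)) by (apply ln_nonneg; lra).
  pose proof (Rabs_pos (ln c0)). pose proof (Rle_abs (- ln c0)). rewrite Rabs_Ropp in H0.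
  assert (Q1 : 0 < c0 / E0) by (apply Rdiv_lt_0_compat; auto).
  assert (Q2 : 0 < exp (zu - a - 1) / (zu + 1)) by (apply Rdiv_lt_0_compat; [apply exp_pos|lra]).
  assert (Q3 : 0 < exp (zu - a - 1) / (zu + 1) / E) by (apply Rdiv_lt_0_compat; auto).
  apply ln_le_mono in HS1; auto. apply ln_le_mono in HS2; auto.
  rewrite ln_div' in HS1 by auto. rewrite ln_div', ln_div', ln_exp in HS2 by (auto; try lra; apply exp_pos).
  unfold Rmax. destruct (Rle_dec (zu - z1) 0); lra.
Qed.

Lemma Rpower_inv_pow (y b : R) : 0 < b -> 0 < y -> Rpower (Rpower y (1/b)) b = y.
Proof. intros Hb Hy. rewrite Rpower_mult. replace (1/b*b) with 1 by (field; lra). apply Rpower_1; auto. Qed.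

Lemma Rpower_pos (x y : R) : 0 < Rpower x y.
Proof. unfold Rpower; apply exp_pos. Qed.

Lemma ML_bounds_y (b y : R) : 0 < b -> 0 < y ->
  exp (Rpower y (1/b) - b - 1) / (Rpower y (1/b) + 1) <= ML b y <=
  exp (Rpower y (1/b) + 3) * (1 + (Rpower y (1/b) + 1) / b).
Proof.
  intros Hb Hy. pose proof (Rpower_pos y (1/b)) as Hz.
  pose proof (ML_lower b _ Hb Hz) as H1. pose proof (ML_upper b _ Hb Hz) as H2.
  rewrite Rpower_inv_pow in H1, H2 by auto. auto.
Qed.

Lemma MLt_lower_y (b y : R) (k : nat) : 0 < b -> 0 < y ->
  Rpower y (1/b) - b < b * INR k <= Rpower y (1/b) ->
  exp (Rpower y (1/b) - b - 1) / (Rpower y (1/b) + 1) <= MLt b y k.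
Proof.
  intros Hb Hy Hk. pose proof (Rpower_pos y (1/b)) as Hz.
  pose proof (MLt_lower b _ k Hb Hz Hk) as H1. rewrite Rpower_inv_pow in H1 by auto. auto.
Qed.

Lemma ML_ex_y (b y : R) : 0 < b -> 0 < y -> ex_series (MLt b y).
Proof.
  intros Hb Hy. rewrite <- (Rpower_inv_pow y b) by auto. apply ML_ex; auto. apply Rpower_pos.
Qed.

Lemma z_fact (lam c t q : R) : 0 < lam -> 0 < t -> 0 < q ->
  Rpower (lam * Rpower t c) (1/q) = Rpower lam (1/q) * Rpower t (c/q).
Proof.
  intros Hl Ht Hq. rewrite <- Rpower_mult_distr by (auto; apply Rpower_pos).
  rewrite Rpower_mult. f_equal. f_equal. field. lra.
Qed.

Lemma ln_le_KT (x K T : R) : 0 < x -> 0 < K -> 0 < T -> x <= K * T -> ln x <= ln K + ln T.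
Proof. intros. rewrite <- ln_mult by auto. apply ln_le_mono; auto. Qed.

Lemma key (lam a0 ta0 a ta u t : R) :
  0 < lam -> 0 < a0 -> 0 < a -> 0 < u -> 1 < t ->
  1 <= Rpower t (ta/a) -> a <= Rpower (lam*u) (1/a) * Rpower t (ta/a) ->
  Rabs (ln (Series (fun k : nat =>
               dkj lam a0 a k k * (u * deltaj ta0 ta k t) ^ k
               / Dj lam a0 a k (deltaj ta0 ta k t)))
        - Rpower t (ta/a) * Rmax (Rpower (lam*u) (1/a) - Rpower lam (1/a)) 0)
  <= (ln 3 + 11 + 2*a
      + 4 * ln (2 + (Rpower (lam*u) (1/a)+1)/a + (Rpower lam (1/a)+1)/a + Rpower (lam*u) (1/a) + Rpower lam (1/a))
      + Rabs (ln (/ Gamma (a0 * INR 0 + 1))) + 1/a0)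
     + 2 * ln (Rpower t (ta/a)) + (1 + 1/a0) * (Rpower lam (1/a0) * Rpower t (ta0/a0)).
Proof.
  intros Hlam Ha0 Ha Hu Ht HT1 HTu.
  set (T := Rpower t (ta/a)) in *.
  set (Lu := Rpower (lam*u) (1/a)) in *.
  set (L1 := Rpower lam (1/a)).
  set (Kb := 2 + (Lu+1)/a + (L1+1)/a + Lu + L1).
  set (c0 := / Gamma (a0 * INR 0 + 1)).
  set (s := Rpower t ta).
  set (w := fun k : nat => dkj lam a0 a k k * (u * deltaj ta0 ta k t) ^ k / Dj lam a0 a k (deltaj ta0 ta k t)).
  set (y1 := lam * s). set (yu := lam * (u * s)). set (y0 := lam * Rpower t ta0).
  assert (Hs : 0 < s) by apply Rpower_pos.
  assert (Hy1 : 0 < y1) by (unfold y1; nra).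
  assert (Hyu : 0 < yu) by (unfold yu; apply Rmult_lt_0_compat; nra).
  assert (Hy0 : 0 < y0) by (unfold y0; pose proof (Rpower_pos t ta0); nra).
  assert (Ez1 : Rpower y1 (1/a) = L1 * T) by (unfold y1, s, L1, T; apply z_fact; lra).
  assert (Ezu : Rpower yu (1/a) = Lu * T).
  { unfold yu. rewrite <- Rmult_assoc. unfold s, Lu, T; apply z_fact; nra. }
  assert (Ez0 : Rpower y0 (1/a0) = Rpower lam (1/a0) * Rpower t (ta0/a0)) by (unfold y0; apply z_fact; lra).
  set (z0 := Rpower lam (1/a0) * Rpower t (ta0/a0)) in *.
  pose proof (ML_bounds_y a y1 Ha Hy1) as B1. rewrite Ez1 in B1.
  pose proof (ML_bounds_y a yu Ha Hyu) as Bu. rewrite Ezu in Bu.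
  pose proof (ML_bounds_y a0 y0 Ha0 Hy0) as B0. rewrite Ez0 in B0.
  assert (HL1 : 0 < L1) by apply Rpower_pos.
  assert (HLu : 0 < Lu) by apply Rpower_pos.
  assert (HTp : 0 < T) by lra.
  assert (Hz0 : 0 < z0) by (unfold z0; pose proof (Rpower_pos lam (1/a0)); pose proof (Rpower_pos t (ta0/a0)); nra).
  set (E := ML a y1) in *. set (E' := ML a yu) in *. set (E0 := ML a0 y0) in *.
  assert (HE : 0 < E).
  { eapply Rlt_le_trans; [|apply B1]. apply Rdiv_lt_0_compat. apply exp_pos. nra. }
  assert (HE' : 0 < E').
  { eapply Rlt_le_trans; [|apply Bu]. apply Rdiv_lt_0_compat. apply exp_pos. nra. }
  assert (HE0 : 0 < E0).
  { eapply Rlt_le_trans; [|apply B0]. apply Rdiv_lt_0_compat. apply exp_pos. nra. }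
  assert (HG0 : 0 < Gamma (a0 * INR 0 + 1)).
  { apply Gamma_pos. simpl. lra. }
  assert (Hc0 : 0 < c0) by (unfold c0; apply Rinv_0_lt_compat; auto).
  assert (Hw0 : w 0%nat = c0 / E0).
  { assert (Hg : Gamma (a0*0+1) <> 0) by (simpl in HG0; lra).
    assert (HM : ML a0 (lam * Rpower t ta0) <> 0) by (exact (Rgt_not_eq _ _ HE0)).
    unfold w, dkj, Dj, deltaj, seq0, c0, E0, y0. simpl. field. auto. }
  assert (HwS : forall n, w (S n) = MLt a yu (S n) / E).
  { intros n.
    assert (HM : ML a (lam * Rpower t ta) <> 0) by (exact (Rgt_not_eq _ _ HE)).
    assert (Hg : Gamma (a * INR (S n) + 1) <> 0).
    { apply Rgt_not_eq. apply Gamma_pos. apply Rmult_le_pos; [lra|apply pos_INR]. }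
    unfold w, dkj, Dj, deltaj, seq0, MLt, E, yu, y1, s.
    rewrite !Rpow_mult_distr. unfold Rdiv; ring. }
  assert (HE0c : c0 <= E0).
  { unfold E0, ML. 
    change (fun k : nat => y0 ^ k / Gamma (a0 * INR k + 1)) with (MLt a0 y0).
    replace c0 with (MLt a0 y0 0%nat) by (unfold MLt, c0; rewrite pow_O; unfold Rdiv; ring).
    apply Series_ge_term. intros; apply MLt_nonneg; lra. apply ML_ex_y; auto. }
  assert (Hexu : ex_series (MLt a yu)) by (apply ML_ex_y; auto).
  set (bb := fun k : nat => MLt a yu k * / E + (1/2) ^ k).
  assert (Hhalf : Rabs (1/2) < 1) by (rewrite Rabs_pos_eq; lra).
  assert (Hexb : ex_series bb).
  { unfold bb. exact (ex_series_plus (K:=R_AbsRing) (V:=R_NormedModule) _ _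
       (ex_series_scal_r _ _ Hexu) (ex_series_geom _ Hhalf)). }
  assert (Hwb : forall k, 0 <= w k <= bb k).
  { intros [|n].
    - rewrite Hw0. unfold bb. simpl.
      assert (0 <= MLt a yu 0 * / E) by (apply Rmult_le_pos; [apply MLt_nonneg; lra| left; apply Rinv_0_lt_compat; auto]).
      split. apply Rdiv_le_0_compat; lra.
      assert (c0 / E0 <= 1). { apply (Rmult_le_reg_r E0); auto. unfold Rdiv. rewrite Rmult_assoc, Rinv_l by lra. lra. }
      lra.
    - rewrite HwS. unfold bb.
      assert (0 <= MLt a yu (S n) / E) by (apply Rdiv_le_0_compat; [apply MLt_nonneg; lra| auto]).
      assert (0 <= (1/2) ^ S n) by (apply pow_le; lra).
      unfold Rdiv in *. lra. }
  assert (Hexw : ex_series w).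
  { apply (ex_series_le (K:=R_AbsRing) (V:=R_CompleteNormedModule) _ bb); auto.
    intros n. unfold norm; simpl; unfold abs; simpl. rewrite Rabs_pos_eq; apply Hwb. }
  assert (HSup : Series w <= 2 + E' / E).
  { eapply Rle_trans. apply Series_le; eauto.
    unfold bb. rewrite Series_plus; auto.
    2: exact (ex_series_scal_r _ _ Hexu).
    2: apply ex_series_geom; auto.
    rewrite Series_scal_r, Series_geom by auto. unfold E', ML.
    change (fun k : nat => yu ^ k / Gamma (a * INR k + 1)) with (MLt a yu).
    right. field. lra. }
  assert (Hwnn : forall k, 0 <= w k) by (intros; apply Hwb).
  assert (HSl0 : c0 / E0 <= Series w) by (rewrite <- Hw0; apply Series_ge_term; auto).
  assert (Hzua : 0 <= Lu * T / a) by (apply Rdiv_le_0_compat; nra).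
  destruct (nfloor_ex (Lu * T / a) Hzua) as [k Hk].
  assert (Hk1 : (1 <= k)%nat).
  { assert (1 <= Lu * T / a).
    { apply (Rmult_le_reg_r a); auto. unfold Rdiv. rewrite Rmult_assoc, Rinv_l by lra. lra. }
    assert (1 < INR k + 1) by lra. assert (H2 : INR 0 < INR k) by (simpl; lra). apply INR_lt in H2. lia. }
  destruct k as [|n]; [lia|].
  assert (HSlu : exp (Lu * T - a - 1) / (Lu * T + 1) / E <= Series w).
  { eapply Rle_trans; [| apply (Series_ge_term w (S n)); auto].
    rewrite HwS. unfold Rdiv at 2 3. apply Rmult_le_compat_r. left; apply Rinv_0_lt_compat; auto.
    rewrite <- Ezu. apply MLt_lower_y; auto. rewrite Ezu.
    split.
    - assert (Lu * T / a < INR (S n) + 1) by lra.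
      apply (Rmult_lt_compat_l a) in H; auto.
      replace (a * (Lu * T / a)) with (Lu * T) in H by (field; lra). lra.
    - assert (INR (S n) <= Lu * T / a) by lra.
      apply (Rmult_le_compat_l a) in H; [|lra].
      replace (a * (Lu * T / a)) with (Lu * T) in H by (field; lra). lra. }
  assert (HSpos : 0 < Series w) by (eapply Rlt_le_trans; [|exact HSl0]; apply Rdiv_lt_0_compat; auto).
  pose proof (upper_abstract (Series w) E E' (Lu*T) (L1*T) a Ha ltac:(nra) ltac:(nra) HSpos HE HE' HSup
     ltac:(apply Bu) ltac:(apply B1)) as UP.
  pose proof (lower_abstract (Series w) E E0 c0 (Lu*T) (L1*T) z0 a a0 Ha Ha0 ltac:(nra) ltac:(nra) ltac:(lra)
     Hc0 HE HE0 HSl0 HSlu ltac:(apply B1) ltac:(apply B0)) as LO.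
  assert (HKb : 1 <= Kb).
  { unfold Kb. assert (0 <= (Lu+1)/a) by (apply Rdiv_le_0_compat; lra).
    assert (0 <= (L1+1)/a) by (apply Rdiv_le_0_compat; lra). lra. }
  assert (HlnKb : 0 <= ln Kb) by (apply ln_nonneg; auto).
  assert (HlnT : 0 <= ln T) by (apply ln_nonneg; auto).
  assert (HLT : forall L, 0 < L -> (L*T+1)/a <= ((L+1)/a) * T).
  { intros L HL. unfold Rdiv. replace ((L+1) * /a * T) with ((L*T + T) * / a) by ring.
    apply Rmult_le_compat_r. left; apply Rinv_0_lt_compat; auto. lra. }
  assert (P1 : 0 <= (Lu+1)/a) by (apply Rdiv_le_0_compat; lra).
  assert (P2 : 0 <= (L1+1)/a) by (apply Rdiv_le_0_compat; lra).
  assert (P3 : 0 <= ((Lu+1)/a) * T) by (apply Rmult_le_pos; lra).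
  assert (P4 : 0 <= ((L1+1)/a) * T) by (apply Rmult_le_pos; lra).
  assert (P5 : 0 <= Lu * T) by (apply Rmult_le_pos; lra).
  assert (P6 : 0 <= L1 * T) by (apply Rmult_le_pos; lra).
  assert (KbT : Kb * T = 2 * T + ((Lu+1)/a) * T + ((L1+1)/a) * T + Lu * T + L1 * T) by (unfold Kb; ring).
  assert (HKb0 : 0 < Kb) by lra.
  assert (e1 : ln (1 + (Lu * T + 1) / a) <= ln Kb + ln T).
  { pose proof (HLT Lu HLu).
    assert (0 <= (Lu * T + 1) / a) by (apply Rdiv_le_0_compat; lra).
    apply ln_le_KT; lra. }
  assert (e2 : ln (1 + (L1 * T + 1) / a) <= ln Kb + ln T).
  { pose proof (HLT L1 HL1).
    assert (0 <= (L1 * T + 1) / a) by (apply Rdiv_le_0_compat; lra).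
    apply ln_le_KT; lra. }
  assert (e3 : ln (Lu * T + 1) <= ln Kb + ln T) by (apply ln_le_KT; lra).
  assert (e4 : ln (L1 * T + 1) <= ln Kb + ln T) by (apply ln_le_KT; lra).
  assert (e5 : ln (1 + (z0 + 1) / a0) <= (z0 + 1) / a0).
  { assert (0 <= (z0 + 1) / a0) by (apply Rdiv_le_0_compat; lra).
    pose proof (ln_le_sub1 (1 + (z0 + 1) / a0) ltac:(lra)). lra. }
  assert (Emax : Rmax (Lu * T - L1 * T) 0 = T * Rmax (Lu - L1) 0).
  { replace (Lu * T - L1 * T) with ((Lu - L1) * T) by ring.
    unfold Rmax. destruct (Rle_dec ((Lu - L1) * T) 0) as [h1|h1]; destruct (Rle_dec (Lu - L1) 0) as [h2|h2].
    - ring.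
    - exfalso. assert (0 < (Lu - L1) * T) by (apply Rmult_lt_0_compat; lra). lra.
    - exfalso. assert ((Lu - L1) * T <= 0 * T) by (apply Rmult_le_compat_r; lra). lra.
    - ring. }
  rewrite Emax in UP, LO.
  assert (e6 : (z0 + 1) / a0 = z0 * (1/a0) + 1/a0) by (field; lra).
  assert (Q0 : 0 < 1/a0) by (apply Rdiv_lt_0_compat; lra).
  pose proof (Rabs_pos (ln c0)).
  assert (Q1 : 0 <= z0 * (1/a0)) by (apply Rmult_le_pos; lra).
  assert (Q2 : (1 + 1/a0) * z0 = z0 + z0 * (1/a0)) by ring.
  rewrite Q2.
  assert (0 <= ln 3) by (apply ln_nonneg; lra).
  apply Rabs_le. split; lra.
Qed.

Lemma lim_Rpower_p (q : R) : 0 < q -> is_lim (fun t => Rpower t q) p_infty p_infty.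
Proof.
  intros Hq. apply is_lim_spec. simpl. intros M.
  exists (Rpower (Rmax M 1) (1/q)). intros t Ht.
  assert (Hm : 0 < Rmax M 1) by (pose proof (Rmax_r M 1); lra).
  pose proof (Rpower_pos (Rmax M 1) (1/q)).
  assert (H2 : Rpower (Rpower (Rmax M 1) (1/q)) q < Rpower t q) by (apply Rlt_Rpower_l; lra).
  rewrite Rpower_mult in H2. replace (1/q*q) with 1 in H2 by (field; lra).
  rewrite Rpower_1 in H2 by auto. pose proof (Rmax_l M 1). lra.
Qed.

Lemma lim_inv_Rpower (q : R) : 0 < q -> is_lim (fun t => / Rpower t q) p_infty 0.
Proof.
  intros Hq. pose proof (is_lim_inv _ _ _ (lim_Rpower_p q Hq) ltac:(discriminate)) as H.
  simpl in H. exact H.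
Qed.

Lemma lim_ln_Rpower (q : R) : 0 < q -> is_lim (fun t => ln (Rpower t q) / Rpower t q) p_infty 0.
Proof.
  intros Hq. apply (is_lim_comp (fun y => ln y / y) (fun t => Rpower t q) p_infty 0 p_infty).
  - exact is_lim_div_ln_p.
  - apply lim_Rpower_p; auto.
  - exists 0. intros; discriminate.
Qed.

Lemma lim_scal0 (f : R -> R) (c : R) : is_lim f p_infty 0 -> is_lim (fun t => c * f t) p_infty 0.
Proof.
  intros H. pose proof (is_lim_scal_l f c p_infty 0 H) as H1. simpl in H1.
  rewrite Rmult_0_r in H1. exact H1.
Qed.

Lemma lim_plus0 (f g : R -> R) : is_lim f p_infty 0 -> is_lim g p_infty 0 ->
  is_lim (fun t => f t + g t) p_infty 0.
Proof.
  intros H1 H2. pose proof (is_lim_plus' f g p_infty 0 0 H1 H2) as H. rewrite Rplus_0_r in H. exact H.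
Qed.

Theorem lemma4p1 (lam a0 ta0 a ta : R) :
  0 < lam ->
  0 < a0 <= 1 -> 0 < ta0 <= 1 -> 0 < a <= 1 -> 0 < ta <= 1 ->
  ta / a - ta0 / a0 > 0 ->
  forall u : R, 0 < u ->
    is_lim
      (fun t : R =>
         ln (Series (fun k : nat =>
               dkj lam a0 a k k * (u * deltaj ta0 ta k t) ^ k
               / Dj lam a0 a k (deltaj ta0 ta k t)))
         / Rpower t (ta / a))
      p_infty
      (Rmax (DeltaF lam a u - DeltaF lam a 1) 0)
    /\ Rmax (DeltaF lam a u - DeltaF lam a 1) 0
       = Rmax (Rpower lam (1 / a) * (Rpower u (1 / a) - 1)) 0.
Proof.
  intros Hlam Ha0 Hta0 Ha Hta Hgap u Hu.
  unfold DeltaF. rewrite Rmult_1_r.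
  split.
  2:{ f_equal. rewrite <- Rpower_mult_distr by auto. ring. }
  set (Lu := Rpower (lam*u) (1/a)). set (L1 := Rpower lam (1/a)).
  set (L := Rmax (Lu - L1) 0).
  set (C := ln 3 + 11 + 2*a + 4 * ln (2 + (Lu+1)/a + (L1+1)/a + Lu + L1)
      + Rabs (ln (/ Gamma (a0 * INR 0 + 1))) + 1/a0).
  set (K := (1 + 1/a0) * Rpower lam (1/a0)).
  assert (Hq : 0 < ta / a) by (apply Rdiv_lt_0_compat; lra).
  set (g := fun t => C * / Rpower t (ta/a) + 2 * (ln (Rpower t (ta/a)) / Rpower t (ta/a))
                     + K * / Rpower t (ta/a - ta0/a0)).
  assert (Hg : is_lim g p_infty 0).
  { unfold g. apply lim_plus0. apply lim_plus0.
    - apply lim_scal0. apply lim_inv_Rpower; auto.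
    - apply lim_scal0. apply lim_ln_Rpower; auto.
    - apply lim_scal0. apply lim_inv_Rpower; lra. }
  assert (HLo : is_lim (fun t => L - g t) p_infty L).
  { pose proof (is_lim_minus' (fun _ => L) g p_infty L 0 (is_lim_const L p_infty) Hg) as H.
    rewrite Rminus_0_r in H. exact H. }
  assert (HHi : is_lim (fun t => L + g t) p_infty L).
  { pose proof (is_lim_plus' (fun _ => L) g p_infty L 0 (is_lim_const L p_infty) Hg) as H.
    rewrite Rplus_0_r in H. exact H. }
  apply (is_lim_le_le_loc (fun t => L - g t) (fun t => L + g t)); auto.
  assert (HLu : 0 < Lu) by apply Rpower_pos.
  set (K0 := 1 + a / Lu).
  assert (HK0 : 1 < K0) by (unfold K0; assert (0 < a / Lu) by (apply Rdiv_lt_0_compat; lra); lra).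
  exists (Rmax 1 (Rpower K0 (a/ta))). intros t Ht.
  assert (Ht1 : 1 < t) by (pose proof (Rmax_l 1 (Rpower K0 (a/ta))); lra).
  assert (HTK : K0 < Rpower t (ta/a)).
  { pose proof (Rpower_pos K0 (a/ta)).
    assert (H2 : Rpower (Rpower K0 (a/ta)) (ta/a) < Rpower t (ta/a))
      by (apply Rlt_Rpower_l; auto; pose proof (Rmax_r 1 (Rpower K0 (a/ta))); lra).
    rewrite Rpower_mult in H2. replace (a/ta*(ta/a)) with 1 in H2 by (field; lra).
    rewrite Rpower_1 in H2 by lra. exact H2. }
  set (T := Rpower t (ta/a)) in *.
  assert (HT1 : 1 <= T) by lra.
  assert (HTu : a <= Lu * T).
  { assert (Lu * K0 = Lu + a) by (unfold K0; field; lra).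
    assert (Lu * K0 <= Lu * T) by (apply Rmult_le_compat_l; lra). lra. }
  pose proof (key lam a0 ta0 a ta u t Hlam ltac:(lra) ltac:(lra) Hu Ht1 HT1 HTu) as HK.
  fold T Lu L1 in HK. fold L C in HK.
  set (S := Series _) in *.
  assert (HTp : 0 < T) by lra.
  assert (Hz : Rpower lam (1/a0) * Rpower t (ta0/a0) / T = Rpower lam (1/a0) * / Rpower t (ta/a - ta0/a0)).
  { unfold T. assert (Rpower t (ta/a - ta0/a0) * Rpower t (ta0/a0) = Rpower t (ta/a)).
    { rewrite <- Rpower_plus. f_equal. ring. }
    pose proof (Rpower_pos t (ta/a - ta0/a0)). pose proof (Rpower_pos t (ta0/a0)).
    rewrite <- H. field. split; lra. }
  assert (Hgt : g t = (C + 2 * ln T + (1 + 1/a0) * (Rpower lam (1/a0) * Rpower t (ta0/a0))) / T).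
  { unfold g. fold T. unfold K. rewrite Rmult_assoc, <- Hz. field. lra. }
  rewrite Hgt.
  set (B := C + 2 * ln T + (1 + 1/a0) * (Rpower lam (1/a0) * Rpower t (ta0/a0))) in *.
  pose proof (Rle_abs (ln S - T * L)). pose proof (Rle_abs (- (ln S - T * L))). rewrite Rabs_Ropp in H0.
  assert (E1 : (L - B / T) * T = T * L - B) by (field; lra).
  assert (E2 : (L + B / T) * T = T * L + B) by (field; lra).
  assert (E3 : ln S / T * T = ln S) by (field; lra).
  split; apply (Rmult_le_reg_r T); auto; rewrite ?E1, ?E2, ?E3; lra.
Qed.
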